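(* Let $(X_n)_{n\in\mathbb{N}}$ be i.i.d. real random variables with distribution function $F$ and survival function $\bar F(x)=\mathbb{P}(X_1>x)$, with $\bar F(x)=x^{-\alpha}L(x)$ for all $x>x_0$, where $x_0>0$, $\alpha>0$ and $L$ is slowly varying. Let $X_{(n)}=\max_{1\le i\le n}X_i$, $a_n=F^{\leftarrow}(1-1/n)$ and, for $n\ge2$, $Z_n=(X_{(n)}/a_n)^{\alpha/\log n}$ (on $\{X_{(n)}>0\}$). Then for every $x\ge 1$, \[ \limsup_{n\to\infty}\frac{1}{\log n}\log\mathbb{P}(Z_n>x)\le -\log x. \]
   Context: A function $L:(0,\infty)\to(0,\infty)$ is slowly varying if $\lim_{x\to\infty}L(tx)/L(x)=1$ for all $t>0$. $F^{\leftarrow}(u)=\inf\{x\in\mathbb{R}: F(x)\ge u\}$. Note $\{Z_n>x\}=\{X_{(n)}>a_n x^{\log n/\alpha}\}$ for $x\ge1$ once $a_n>0$. *)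

(* Defs.v *)
From HB Require Import structures.
From mathcomp Require Import all_boot all_order all_algebra.
From mathcomp Require Import all_classical all_reals all_analysis.
Set Implicit Arguments. Unset Strict Implicit. Unset Printing Implicit Defensive.
Import Order.TTheory GRing.Theory Num.Theory.
Import numFieldNormedType.Exports.
Local Open Scope classical_set_scope.
Local Open Scope ring_scope.

Section Defs.
Context {R : realType} {d : measure_display} {T : measurableType d}.
Variable P : probability T R.

Definition mutually_independent (X : nat -> {RV P >-> R}) : Prop :=
  forall (s : seq nat) (B : nat -> set R), uniq s ->
    (forall i, measurable (B i)) ->
    fine (P (\big[setI/setT]_(i <- s) (X i @^-1` B i))) =
    \prod_(i <- s) fine (P (X i @^-1` B i)).

Definition identically_distributed (X : nat -> {RV P >-> R}) : Prop :=
  forall n (B : set R), measurable B -> P (X n @^-1` B) = P (X 0%N @^-1` B).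

Definition distF (X : {RV P >-> R}) (x : R) : R := fine (P [set w | X w <= x]).
Definition survF (X : {RV P >-> R}) (x : R) : R := fine (P [set w | x < X w]).

End Defs.

Definition geninv {R : realType} (F : R -> R) (u : R) : R := inf [set x | u <= F x].

Definition slowly_varying {R : realType} (L : R -> R) : Prop :=
  (forall x, 0 < x -> 0 < L x) /\
  forall t, 0 < t -> (fun x => L (t * x) / L x) @ +oo --> (1 : R).

Definition maxX {R : realType} {T : Type} (X : nat -> T -> R) (n : nat) (w : T) : R :=
  \big[Num.max/X 1%N w]_(1 <= i < n.+1) X i w.

(* Main.v *)
Require Import Defs.
From HB Require Import structures.
From mathcomp Require Import all_boot all_order all_algebra.
From mathcomp Require Import all_classical all_reals all_analysis.
From mathcomp Require Import ring lra zify.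
Import Order.TTheory GRing.Theory Num.Theory.
Import numFieldNormedType.Exports.
Local Open Scope classical_set_scope.
Local Open Scope ring_scope.
Section S.
Variable R : realType.
Lemma iter_bound (S : R -> R) (A r : R) :
  (forall t, A <= t -> S (2 * t) <= r * S t) -> 0 <= r -> 0 < A ->
  forall k u, A <= u -> S (2 ^+ k * u) <= r ^+ k * S u.
Proof.
move=> H r0 A0; elim=> [|k IH] u Au; first by rewrite !expr0 !mul1r.
have h2 : 1 <= (2:R) ^+ k by rewrite exprn_ege1// ler1n.
have Ak : A <= 2 ^+ k * u by nra.
rewrite exprS -mulrA; apply: (le_trans (H _ Ak)).
by rewrite exprS -mulrA ler_wpM2l// IH.
Qed.
Lemma potter_bound (S : R -> R) (A b : R) :
  (forall s t, s <= t -> S t <= S s) -> (forall t, 0 <= S t) ->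
  (forall t, A <= t -> S (2 * t) <= expR (- (b * ln 2)) * S t) -> 0 <= b -> 0 < A ->
  forall u y, A <= u -> u <= y ->
  S y <= expR (b * ln 2) * expR (- (b * ln (y / u))) * S u.
Proof.
move=> Smon S0 H b0 A0 u y Au uy.
have u0 : 0 < u by apply: (lt_le_trans A0 Au).
have ln2 : 0 < ln (2:R) by rewrite ln_gt0 // ltr1n.
suff: forall m : nat, y < 2 ^+ m * u ->
    S y <= expR (b * ln 2) * expR (- (b * ln (y / u))) * S u.
  move=> Hm.
  have [m hm] : exists m : nat, y / u < m%:R.
    exists (Num.truncn (y / u)).+1; exact: truncnS_gt.
  apply: (Hm m); rewrite -ltr_pdivrMr //; apply: (lt_le_trans hm).
  rewrite -natrX ler_nat; exact: (ltnW (ltn_expl m (isT : (1 < 2)%N))).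
elim=> [|m IH] hy; first by move: hy; rewrite expr0 mul1r => /(le_lt_trans uy); rewrite ltxx.
have [hlt|hge] := ltP y (2 ^+ m * u); first exact: IH.
apply: (le_trans (Smon _ _ hge)).
apply: (le_trans (iter_bound _ _ _ H (expR_ge0 _) A0 m u Au)).
apply: ler_wpM2r => //.
rewrite -expRM_natl -!expRD ler_expR.
have yu0 : 0 < y / u by rewrite divr_gt0 // (lt_le_trans u0 uy).
have : ln (y / u) < m.+1%:R * ln 2.
  rewrite mulr_natl -lnXn // ltr_ln ?posrE ?exprn_gt0 //.
  by rewrite ltr_pdivrMr.
move=> hl.
have : b * ln (y / u) <= b * (m.+1%:R * ln 2) by rewrite ler_wpM2l // ltW.
rewrite -natr1; nra.
Qed.
Lemma step_bound (S L : R -> R) (x0 alpha beta : R) :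
  0 < x0 -> beta < alpha -> slowly_varying L ->
  (forall x, x0 < x -> S x = powR x (- alpha) * L x) ->
  exists A, 0 < A /\ forall t, A <= t -> S (2 * t) <= expR (- (beta * ln 2)) * S t.
Proof.
move=> x00 ba [Lpos Lsv] HS.
have ln2 : 0 < ln (R:=R) 2 by rewrite ln_gt0 // ltr1n.
have z1 : 1 < expR ((alpha - beta) * ln 2) by rewrite expR_gt1 mulr_gt0 // subr_gt0.
have := cvgr_lt 1 (Lsv 2 (ltr0Sn _ 1)) _ z1.
move=> [M [Mreal HM]].
have m1 : M <= Num.max M x0 by rewrite le_max lexx.
have m2 : x0 <= Num.max M x0 by rewrite le_max lexx orbT.
exists (Num.max M x0 + 1); split; first by lra.
move=> t Ht.
have Mt : M < t by lra.
have x0t : x0 < t by lra.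
have t0 : 0 < t by apply: lt_trans x0t.
have x02t : x0 < 2 * t by lra.
have Lt := Lpos t t0.
have hz := HM t Mt; rewrite /= ltr_pdivrMr // in hz.
rewrite (HS _ x02t) (HS _ x0t) (powRM _ (ler0n _ 2) (ltW t0)).
have -> : expR (- (beta * ln 2)) = powR 2 (- alpha) * expR ((alpha - beta) * ln 2).
  by rewrite /powR pnatr_eq0 /= -expRD; congr expR; ring.
have -> : 2 `^ (- alpha) * expR ((alpha - beta) * ln 2) * (t `^ (- alpha) * L t)
  = 2 `^ (- alpha) * (t `^ (- alpha) * (expR ((alpha - beta) * ln 2) * L t)) by ring.
rewrite -mulrA ler_wpM2l ?powR_ge0 // ler_wpM2l ?powR_ge0 // ltW //.
Qed.
End S.
Section P.
Context {R : realType} {d : measure_display} {T : measurableType d}.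
Variable P : probability T R.

Lemma mset_lt (Y : {RV P >-> R}) (t : R) : measurable [set w | t < Y w].
Proof.
have := measurable_funPTI Y (measurable_itv `]t, +oo[).
by congr measurable; apply/seteqP; split => w /=; rewrite in_itv /= andbT.
Qed.

Lemma mset_le (Y : {RV P >-> R}) (t : R) : measurable [set w | Y w <= t].
Proof.
have := measurable_funPTI Y (measurable_itv `]-oo, t]).
by congr measurable; apply/seteqP; split => w /=; rewrite in_itv /=.
Qed.

Lemma fin_P (A : set T) : measurable A -> P A \is a fin_num.
Proof. exact: fin_num_measure. Qed.

Lemma survF_distF (Y : {RV P >-> R}) (t : R) : survF Y t = 1 - distF Y t.
Proof.
rewrite /survF /distF.
have -> : [set w | t < Y w] = ~` [set w | Y w <= t].
  apply/seteqP; split => w /=; rewrite ltNge; first by move/negP.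
  by move=> h; apply/negP.
rewrite probability_setC; last exact: mset_le.
rewrite fineB ?fin_P //; exact: mset_le.
Qed.

Lemma survF_ge0 (Y : {RV P >-> R}) (t : R) : 0 <= survF Y t.
Proof. by rewrite /survF fine_ge0 // measure_ge0. Qed.

Lemma survF_mon (Y : {RV P >-> R}) (s t : R) : s <= t -> survF Y t <= survF Y s.
Proof.
move=> st; rewrite /survF fine_le ?fin_P //; try exact: mset_lt.
apply: le_measure; rewrite ?inE; try exact: mset_lt.
by move=> w /= /(le_lt_trans st).
Qed.

Lemma distF_mon (Y : {RV P >-> R}) (s t : R) : s <= t -> distF Y s <= distF Y t.
Proof.
move=> st; rewrite /distF fine_le ?fin_P //; try exact: mset_le.
apply: le_measure; rewrite ?inE; try exact: mset_le.
by move=> w /= /le_trans; apply.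
Qed.
Lemma pre_lt (Y : {RV P >-> R}) (t : R) : [set w | t < Y w] = Y @^-1` `]t, +oo[.
Proof. by apply/seteqP; split => w /=; rewrite in_itv /= andbT. Qed.

Lemma union_bound (X : nat -> {RV P >-> R}) (n : nat) (y : R) :
  identically_distributed X ->
  (P (\big[setU/set0]_(k < n) [set w | (y < X k.+1 w)%R]) <= ((n%:R * survF (X 1%N) y)%R)%:E)%E.
Proof.
move=> idX.
have := @content_subadditive _ _ _ P (\big[setU/set0]_(k < n) [set w | y < X k.+1 w])
  (fun k => [set w | y < X k.+1 w]) n (fun k _ => mset_lt _ _).
move=> /(_ (bigsetU_measurable _ (fun k _ => mset_lt _ _)) (subset_refl _)) H.
apply: (le_trans (H (fun x h => h))) => {H}.
have Hk : forall k, P [set w | y < X k.+1 w] = (survF (X 1%N) y)%:E.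
  move=> k; rewrite /survF (fineK (fin_P _ (mset_lt (X 1%N) y))) !pre_lt.
  rewrite (idX k.+1) ?(idX 1%N) //; exact: measurable_itv.
rewrite (eq_bigr (fun=> (survF (X 1%N) y)%:E)); last by move=> k _; exact: Hk.
by rewrite sumEFin sumr_const card_ord mulr_natl.
Qed.
Lemma zcond (a M x alpha lnn : R) : 0 < alpha -> 0 < lnn -> 1 <= x ->
  (0 < M /\ x < powR (M / a) (alpha / lnn)) <-> (0 < a /\ a * expR (ln x / alpha * lnn) < M).
Proof.
move=> al lnp x1.
have x0 : 0 < x by lra.
have b0 : 0 < alpha / lnn by rewrite divr_gt0.
have key : forall z, 0 < z -> (x < powR z (alpha / lnn)) = (expR (ln x / alpha * lnn) < z).
  move=> z z0; rewrite /powR gt_eqF // -{1}(lnK x0) ltr_expR.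
  rewrite -{2}(lnK z0) ltr_expR.
  have -> : ln x / alpha * lnn = ln x / (alpha / lnn).
    by field; rewrite ?gt_eqF.
  by rewrite ltr_pdivrMr // mulrC.
split.
- move=> [M0 hx].
  have [a0|a0] := ltP 0 a.
    split => //; rewrite mulrC -ltr_pdivlMr // -key // divr_gt0 //.
  exfalso; move: hx; rewrite /powR.
  case: ifPn => [_|an].
    rewrite (negbTE (lt0r_neq0 b0)) /=; lra.
  rewrite ln0 ?mulr0 ?expR0; last by rewrite pmulr_rle0 // invr_le0.
  lra.
- move=> [a0 h].
  have M0 : 0 < M by apply: lt_trans h; rewrite mulr_gt0 // expR_gt0.
  split => //; rewrite key ?divr_gt0 // ltr_pdivlMr // mulrC //.
Qed.

Lemma lt_bigmax_seq (s : seq nat) (idx y : R) (F : nat -> R) :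
  (y < \big[Num.max/idx]_(i <- s) F i) = (y < idx) || has (fun i => y < F i) s.
Proof.
elim: s => [|i s IH]; first by rewrite big_nil /= orbF.
by rewrite big_cons lt_max IH /= orbCA.
Qed.

Lemma lt_maxX (f : nat -> T -> R) n w y : (0 < n)%N ->
  (y < maxX f n w) <-> exists k, (k < n)%N /\ y < f k.+1 w.
Proof.
move=> n0; rewrite /maxX lt_bigmax_seq; split.
- case/orP.
    by move=> h; exists 0%N.
  case/hasP => i; rewrite mem_index_iota => /andP[i1 iN] h.
  exists i.-1; rewrite prednK //; split => //.
- move=> [k [kn h]]; apply/orP; right; apply/hasP; exists k.+1 => //.
  by rewrite mem_index_iota.
Qed.

Lemma zevent_eq (X : nat -> {RV P >-> R}) (n : nat) (a alpha x : R) :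
  (2 <= n)%N -> 0 < alpha -> 1 <= x ->
  [set w | 0 < maxX (fun i => X i : T -> R) n w /\
           x < powR (maxX (fun i => X i : T -> R) n w / a) (alpha / ln (n%:R : R))]
  = if 0 < a then \big[setU/set0]_(k < n) [set w | (a * expR (ln x / alpha * ln (n%:R : R)) < X k.+1 w)%R]
    else set0.
Proof.
move=> n2 al x1.
have lnn : 0 < ln (n%:R : R) by rewrite ln_gt0 // ltr1n.
apply/seteqP; split => w /=.
- move/(zcond _ _ _ _ _ al lnn x1) => [a0 h]; rewrite a0 -(bigcup_mkord n (fun k : nat => [set w0 | (a * expR (ln x / alpha * ln (n%:R : R)) < X k.+1 w0)%R])).
  move/(lt_maxX _ _ _ _ (ltnW n2)): h => [k [kn h]].
  by exists k.
- case: ifPn => a0 //.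
  rewrite -(bigcup_mkord n (fun k : nat => [set w0 | (a * expR (ln x / alpha * ln (n%:R : R)) < X k.+1 w0)%R])) => -[k kn h].
  apply/(zcond _ _ _ _ _ al lnn x1); split => //.
  by apply/(lt_maxX _ _ _ _ (ltnW n2)); exists k.
Qed.

Lemma an_prop (Y : {RV P >-> R}) (u : R) :
  0 < geninv (distF Y) u -> forall t, geninv (distF Y) u < t -> survF Y t <= 1 - u.
Proof.
rewrite /geninv => h0 t ht.
have [ne|e0] := pselect ([set x | u <= distF Y x] !=set0).
  have [e He et] := inf_lt ne ht.
  rewrite survF_distF; have := distF_mon Y _ _ (ltW et); move: He => /=; lra.
exfalso; move: h0.
have -> : [set x | u <= distF Y x] = set0.
  by apply/seteqP; split => // z hz; apply: e0; exists z.
by rewrite inf0 ltxx.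
Qed.
End P.
Section E.
Variable R : realType.
Lemma esup_le (u : nat -> \bar R) (l : R) :
  (forall e, 0 < e -> exists N, forall n, (N <= n)%N -> (u n <= (l + e)%:E)%E) ->
  (limn_esup u <= l%:E)%E.
Proof.
move=> H; apply/lee_addgt0Pr => e e0; have [N HN] := H e e0.
rewrite /limn_esup /limf_esup.
apply: (@le_trans _ _ (ereal_sup (u @` [set n | (N <= n)%N]))).
  apply: ereal_inf_lbound; exists [set n | (N <= n)%N] => //; exists N => //.
apply: ge_ereal_sup => _ [n hn <-]; rewrite -EFinD; exact: HN.
Qed.
Lemma lne_bound (p : \bar R) (v r : R) : (0 <= p)%E -> (p <= (expR v)%:E)%E -> 0 < r ->
  (lne p * r%:E <= (v * r)%:E)%E.
Proof.
move=> p0 pv r0; case: p p0 pv => [q| |] //= q0 qv.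
- rewrite lee_fin in qv; case: ifPn => q0'.
    by rewrite gt0_mulNye ?lte_fin // leNye.
  rewrite -EFinM lee_fin ler_wpM2r ?(ltW r0) //.
  rewrite -ler_expR lnK //; rewrite posrE; rewrite -ltNge in q0'; exact: q0'.
Qed.

Lemma nat_ln_ge (K : R) : exists N, forall n, (N <= n)%N -> K <= ln (n%:R : R).
Proof.
exists (Num.truncn (expR K)).+1 => n hn.
have h : expR K < n%:R.
  apply: (lt_le_trans (truncnS_gt _)); rewrite ler_nat //.
have n0 : 0 < (n%:R : R) by apply: lt_trans h; exact: expR_gt0.
by rewrite -ler_expR lnK ?posrE // ltW.
Qed.
End E.

Theorem mainTheorem3 (R : realType) (d : measure_display) (T : measurableType d)
  (P : probability T R) (X : nat -> {RV P >-> R})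
  (x0 alpha : R) (L : R -> R) :
  mutually_independent X -> identically_distributed X ->
  0 < x0 -> 0 < alpha -> slowly_varying L ->
  (forall x, x0 < x -> survF (X 1%N) x = powR x (- alpha) * L x) ->
  let a := fun n : nat => geninv (distF (X 1%N)) (1 - n%:R^-1) in
  let Zevent := fun (n : nat) (x : R) =>
    [set w | 0 < maxX (fun i => X i : T -> R) n w /\
             x < powR (maxX (fun i => X i : T -> R) n w / a n) (alpha / ln (n%:R : R))] in
  forall x : R, 1 <= x ->
    (limn_esup (fun n : nat =>
       if (2 <= n)%N then (lne (P (Zevent n x)) * ((ln (n%:R : R))^-1)%:E)%E
       else 0%E) <= (- ln x)%:E)%E.
Proof.
move=> _ idX x00 al Lsv HS a Zevent x x1.
have Smon : forall s t, s <= t -> survF (X 1%N) t <= survF (X 1%N) s.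
  by move=> s t; exact: survF_mon.
have S0 : forall t, 0 <= survF (X 1%N) t by move=> t; exact: survF_ge0.
apply: esup_le => e e0.
have lnpos : forall n, (2 <= n)%N -> 0 < ln (n%:R : R).
  by move=> n n2; rewrite ln_gt0 // ltr1n.
have [lxe|exl] := ltP (ln x) e.
  exists 2%N => n n2; rewrite n2.
  have := lnpos n n2 => lnn.
  apply: (le_trans (lne_bound _ _ 0 _ (measure_ge0 _ _) _ _)); last first.
    by rewrite mul0r lee_fin; lra.
  - by rewrite invr_gt0.
  rewrite expR0 /Zevent (zevent_eq _ _ _ _ _ _ n2 al x1); case: ifPn => _.
    by apply: probability_le1; apply: bigsetU_measurable => k _; exact: mset_lt.
  by rewrite measure0 lee_fin.

have lx0 : 0 < ln x by apply: lt_le_trans exl.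
set f := e / (2 * ln x).
have f0 : 0 < f by rewrite divr_gt0 // mulr_gt0.
have f12 : f <= 1 / 2.
  by rewrite /f ler_pdivrMr ?mulr_gt0 //; lra.
set beta := alpha * (1 - f).
have hb1 : beta < alpha by rewrite /beta; nra.
have hb0 : 0 <= beta by rewrite /beta; nra.
have [A [A0 HA]] := step_bound _ _ _ _ _ _ x00 hb1 Lsv HS.
set A1 := Num.max A (x0 + 1).
have A1A : A <= A1 by rewrite le_max lexx.
have A1x : x0 + 1 <= A1 by rewrite le_max lexx orbT.
have A10 : 0 < A1 by lra.
have HA1 : forall t, A1 <= t -> survF (X 1%N) (2 * t) <= expR (- (beta * ln 2)) * survF (X 1%N) t.
  by move=> t ht; apply: HA; lra.
have SA1 : 0 < survF (X 1%N) A1.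
  rewrite HS; last by lra.
  by rewrite mulr_gt0 ?powR_gt0 //; case: Lsv => Lp _; apply: Lp.
have Pot := potter_bound _ _ _ _ Smon S0 HA1 hb0 A10.
have [N2 HN2] := nat_ln_ge _ (ln 2 / (ln x / alpha)).
have [N3 HN3] := nat_ln_ge _ (4 * beta * ln 2 / e).
set N1 := (Num.truncn (survF (X 1%N) A1)^-1).+1.
exists (maxn 2 (maxn N1 (maxn N2 N3))) => n.
rewrite !geq_max => /and4P[n2 n1 /HN2 ln2n /HN3 ln3n].
rewrite n2.
have lnn := lnpos n n2.
have n0 : 0 < (n%:R : R) by rewrite ltr0n; apply: leq_trans n2.
rewrite /Zevent (zevent_eq _ _ _ _ _ _ n2 al x1).
set v := beta * ln 2 - beta * (ln x / alpha * ln (n%:R : R) - ln 2).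
have fin : v * (ln (n%:R : R))^-1 <= - ln x + e.
  have -> : v * (ln (n%:R : R))^-1 = 2 * beta * ln 2 / ln (n%:R : R) - (ln x - e / 2).
    rewrite /v /beta /f; field.
    by rewrite !gt_eqF.
  suff : 2 * beta * ln 2 / ln (n%:R : R) <= e / 2 by lra.
  rewrite ler_pdivrMr //.
  have h := ler_wpM2l (ltW e0) ln3n.
  rewrite mulrCA divff ?gt_eqF // mulr1 in h.
  nra.
apply: (le_trans (lne_bound _ _ v _ (measure_ge0 _ _) _ _)); last by rewrite lee_fin.
  2: by rewrite invr_gt0.
case: ifPn => an0; last by rewrite measure0 lee_fin expR_ge0.
set y := a n * expR (ln x / alpha * ln (n%:R : R)).
apply: (le_trans (union_bound _ _ _ y idX)); rewrite lee_fin.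
set u := 2 * a n.
have Su : survF (X 1%N) u <= n%:R^-1.
  have := an_prop _ _ _ an0 u; rewrite /a subKr; apply; rewrite /u; lra.
have uA : A1 <= u.
  rewrite leNgt; apply/negP => uA.
  have := an_prop _ _ _ an0 A1; rewrite subKr => /(_ _) h.
  have {h} h : survF (X 1%N) A1 <= n%:R^-1 by apply: h; rewrite /u in uA; lra.
  have : (n%:R : R) <= (survF (X 1%N) A1)^-1.
    by rewrite -(invrK (n%:R)) lef_pV2 ?posrE ?invr_gt0.
  have : (survF (X 1%N) A1)^-1 < N1%:R by exact: truncnS_gt.
  have : (N1%:R : R) <= n%:R by rewrite ler_nat.
  lra.
have ec : ln 2 <= ln x / alpha * ln (n%:R : R).
  by rewrite mulrC -ler_pdivrMr ?divr_gt0.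
have uy : u <= y.
  rewrite /u /y mulrC ler_pM2l //.
  by rewrite -(lnK (_ : 0 < 2)) ?posrE // ler_expR.
have lyu : ln (y / u) = ln x / alpha * ln (n%:R : R) - ln 2.
  rewrite /y /u (_ : _ / _ = expR (ln x / alpha * ln (n%:R : R)) / 2).
    by rewrite ln_div ?posrE ?expR_gt0 // expRK.
  by field; rewrite gt_eqF.
have := Pot u y uA uy; rewrite lyu => hS.
have -> : expR v = n%:R * (expR (beta * ln 2) * expR (- (beta * (ln x / alpha * ln (n%:R : R) - ln 2))) * n%:R^-1).
  rewrite [RHS]mulrC -!mulrA mulVf ?gt_eqF // mulr1 /v -expRD; congr expR; rewrite /beta; ring.
rewrite ler_pM2l //; apply: (le_trans hS); rewrite ler_wpM2l //.
Qed.
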